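(* Let $\phi$ be a singular-expansive flow of a compact metric space $X$. Then for every compact invariant set $\Lambda\subset X$ with $\Lambda\cap Sing(\phi)=\emptyset$, the restricted flow $\phi|_\Lambda$ is expansive.
   Context: A flow is a continuous $\phi:\mathbb{R}\times X\to X$ with $\phi_0=\mathrm{id}$, $\phi_{t+s}=\phi_t\circ\phi_s$; $\phi_I(x)=\{\phi_t(x):t\in I\}$; $Sing(\phi)$ is the set of fixed points; $dist(z,A)=\inf_{a\in A}d(z,a)$, with $dist(z,\emptyset)=diam(X)$; $\Lambda$ invariant means $\phi_t(\Lambda)=\Lambda$ for all $t$. $\phi$ is singular-expansive if for every $\epsilon>0$ there is $\delta>0$ such that whenever $x,y\in X$ and an increasing homeomorphism $s:\mathbb{R}\to\mathbb{R}$ satisfy $d(\phi_t(x),\phi_{s(t)}(y))\le\delta\,dist(\phi_t(x),Sing(\phi))$ for all $t$, then $\phi_{s(t_0)}(y)\in\phi_{[t_0-\epsilon,t_0+\epsilon]}(x)$ for some $t_0\in\mathbb{R}$. A flow $\psi$ on a compact metric space $Y$ is expansive if for every $\epsilon>0$ there is $\delta>0$ such that whenever $x,y\in Y$ and a continuous $s:\mathbb{R}\to\mathbb{R}$ with $s(0)=0$ satisfy $d(\psi_t(x),\psi_{s(t)}(y))\le\delta$ for all $t$, then $y\in\psi_{[-\epsilon,\epsilon]}(x)$. *)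

(* Defs.v *)
From HB Require Import structures.
From mathcomp Require Import all_boot all_order all_algebra.
From mathcomp Require Import all_classical all_reals all_analysis.
From Stdlib Require List.
Set Implicit Arguments. Unset Strict Implicit. Unset Printing Implicit Defensive.
Import Order.TTheory GRing.Theory Num.Theory.
Import numFieldNormedType.Exports.
Local Open Scope classical_set_scope.
Local Open Scope ring_scope.

Section Defs.
Variable R : realType.

Definition is_metric (X : Type) (d : X -> X -> R) : Prop :=
  (forall x y, 0 <= d x y) /\
  (forall x y, d x y = 0 <-> x = y) /\
  (forall x y, d x y = d y x) /\
  (forall x y z, d x z <= d x y + d y z).

Definition mopen (X : Type) (d : X -> X -> R) (U : set X) : Prop :=
  forall x, U x -> exists r, 0 < r /\ forall y, d x y < r -> U y.

Definition mcompact (X : Type) (d : X -> X -> R) (K : set X) : Prop :=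
  forall (I : Type) (U : I -> set X),
    (forall i, mopen d (U i)) ->
    (forall x, K x -> exists i, U i x) ->
    exists l : seq I, forall x, K x -> exists i, List.In i l /\ U i x.

Definition compact_metric_space (X : Type) (d : X -> X -> R) : Prop :=
  is_metric d /\ mcompact d setT.

Definition is_flow (X : Type) (d : X -> X -> R) (phi : R -> X -> X) : Prop :=
  (forall (t : R) (x : X) (e : R), 0 < e -> exists del : R, 0 < del /\
     forall (s : R) (y : X), `|s - t| < del -> d x y < del ->
       d (phi t x) (phi s y) < e) /\
  (forall x, phi 0 x = x) /\
  (forall t s x, phi (t + s) x = phi t (phi s x)).

Definition Sing (X : Type) (phi : R -> X -> X) : set X :=
  [set x | forall t, phi t x = x].

Definition diam (X : Type) (d : X -> X -> R) : R :=
  sup [set r | exists x y, r = d x y].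

Definition dist (X : Type) (d : X -> X -> R) (z : X) (A : set X) : R :=
  if pselect (exists a, A a) then inf [set r | exists a, A a /\ r = d z a]
  else diam d.

Definition orbit_seg (X : Type) (phi : R -> X -> X) (a b : R) (x : X) : set X :=
  [set z | exists t, a <= t /\ t <= b /\ z = phi t x].

Definition increasing_homeo (s : R -> R) : Prop :=
  (exists g : R -> R, cancel s g /\ cancel g s /\ continuous s /\ continuous g) /\
  (forall a b, a < b -> s a < s b).

Definition singular_expansive (X : Type) (d : X -> X -> R) (phi : R -> X -> X) : Prop :=
  forall e : R, 0 < e -> exists del : R, 0 < del /\
    forall (x y : X) (s : R -> R), increasing_homeo s ->
      (forall t, d (phi t x) (phi (s t) y) <= del * dist d (phi t x) (Sing phi)) ->
      exists t0, orbit_seg phi (t0 - e) (t0 + e) x (phi (s t0) y).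

Definition expansive (Y : Type) (dY : Y -> Y -> R) (psi : R -> Y -> Y) : Prop :=
  forall e : R, 0 < e -> exists del : R, 0 < del /\
    forall (x y : Y) (s : R -> R), continuous s -> s 0 = 0 ->
      (forall t, dY (psi t x) (psi (s t) y) <= del) ->
      orbit_seg psi (- e) e x y.

Definition flow_invariant (X : Type) (phi : R -> X -> X) (L : set X) : Prop :=
  forall t, phi t @` L = L.

Lemma invariant_fwd (X : Type) (phi : R -> X -> X) (L : set X) :
  flow_invariant phi L -> forall t x, L x -> L (phi t x).
Proof. by move=> H t x Lx; rewrite -(H t); exists x. Qed.

Definition sub_dist (X : Type) (d : X -> X -> R) (L : set X) (a b : {x : X | L x}) : R :=
  d (proj1_sig a) (proj1_sig b).

Definition restrict_flow (X : Type) (phi : R -> X -> X) (L : set X)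
  (HL : flow_invariant phi L) (t : R) (a : {x : X | L x}) : {x : X | L x} :=
  exist L (phi t (proj1_sig a)) (invariant_fwd HL t (proj2_sig a)).

End Defs.

(* Main.v *)
Require Import Defs.
From HB Require Import structures.
From mathcomp Require Import all_boot all_order all_algebra.
From mathcomp Require Import all_classical all_reals all_analysis.
From mathcomp Require Import ring lra.
Import Order.TTheory GRing.Theory Num.Theory.
Import numFieldNormedType.Exports.
Local Open Scope classical_set_scope.
Local Open Scope ring_scope.

Section Q.
Variable R : realType.

Lemma lip_cont (f : R -> R) K : 0 < K -> (forall x y, `|f x - f y| <= K * `|x - y|) -> continuous f.
Proof.
move=> Kp hf x; apply/cvgrPdist_lt => e e0.
apply/nbhs_ballP; exists (e / K) => [|t].
  by rewrite /=; apply: divr_gt0.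
rewrite /ball /= => ht.
apply: le_lt_trans (hf x t) _.
by rewrite mulrC -ltr_pdivlMr.
Qed.

Lemma bilip_homeo (f : R -> R) c1 c2 : 0 < c1 -> 0 < c2 ->
  (forall t1 t2, t1 <= t2 -> c1 * (t2 - t1) <= f t2 - f t1 <= c2 * (t2 - t1)) ->
  increasing_homeo f.
Proof.
move=> c1p c2p hb.
have hlip : forall x y, `|f x - f y| <= c2 * `|x - y|.
  move=> x y; case: (leP x y) => hxy.
    have /andP [h' h] := hb x y hxy.
    have hpos : 0 <= c1 * (y - x) by rewrite mulr_ge0 ?subr_ge0 // ltW.
    rewrite distrC (distrC x) !ger0_norm ?subr_ge0 //; lra.
  have hxy' := ltW hxy; have /andP [h' h] := hb y x hxy'.
  have hpos : 0 <= c1 * (x - y) by rewrite mulr_ge0 ?subr_ge0 // ltW.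
  rewrite !ger0_norm ?subr_ge0 //; lra.
have fc : continuous f := @lip_cont f c2 c2p hlip.
have inc : forall a b, a < b -> f a < f b.
  move=> a b hab; have /andP [h _] := hb a b (ltW hab).
  have : 0 < c1 * (b - a) by rewrite mulr_gt0 // subr_gt0.
  lra.
have surj : forall y, exists t, f t = y.
  move=> y; pose T := `|y - f 0| / c1.
  have T0 : 0 <= T by rewrite /T divr_ge0 // ltW.
  have hT : c1 * T = `|y - f 0| by rewrite /T mulrC divfK // gt_eqF.
  have /andP [h1 _] := hb 0 T T0.
  have /andP [h2 _] := hb (- T) 0 ltac:(lra).
  have n1 := ler_norm (y - f 0); have n2 := ler_norm (f 0 - y); rewrite distrC in n2.
  have lo : f (- T) <= y by rewrite subr0 in h1; move: h2; rewrite sub0r opprK; lra.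
  have hi : y <= f T by rewrite subr0 in h1; lra.
  have [] := @IVT R f (- T) T y ltac:(lra) (continuous_subspaceT fc).
    have le : f (- T) <= f T by lra.
    by rewrite /= (min_idPl le) (max_idPr le) lo hi.
  by move=> t _ ft; exists t.
pose g y := projT1 (cid (surj y)).
have fg : cancel g f by move=> y; rewrite /g; case: cid.
have finj : injective f.
  move=> a b fab; case: (ltgtP a b) => // h; have := inc _ _ h; rewrite fab ltxx //.
have gf : cancel f g by move=> t; apply: finj; rewrite fg.
split => //; exists g; split => //; split => //; split => //.
apply: (@lip_cont g (c1^-1)); first by rewrite invr_gt0.
move=> x y; rewrite -{2}(fg x) -{2}(fg y); move: (g x) (g y) => a b.
rewrite mulrC.
case: (leP a b) => hab.
  have /andP [h _] := hb _ _ hab.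
  have hpos : 0 <= c1 * (b - a) by rewrite mulr_ge0 ?subr_ge0 // ltW.
  rewrite (distrC a) (distrC (f a)) !ger0_norm ?subr_ge0 //; last lra.
  by rewrite ler_pdivlMr //; lra.
have /andP [h _] := hb _ _ (ltW hab).
have hpos : 0 <= c1 * (a - b) by rewrite mulr_ge0 ?subr_ge0 // ltW.
rewrite !ger0_norm ?subr_ge0 //; [|lra|exact: ltW].
by rewrite ler_pdivlMr //; lra.
Qed.


Lemma pl_homeo (s : R -> R) a : 0 < a -> a <= 1 / 4 ->
  (forall (k : int) tau, 0 <= tau <= 1 -> `|s (k%:~R + tau) - s k%:~R - tau| < a) ->
  exists s', increasing_homeo s' /\ forall t, `|s' t - s t| < 2 * a.
Proof.
move=> ap a4 H.
pose F t := s (Num.floor t)%:~R + (t - (Num.floor t)%:~R) *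
   (s ((Num.floor t)%:~R + 1) - s (Num.floor t)%:~R).
have slope : forall k : int, 1 - a < s (k%:~R + 1) - s k%:~R < 1 + a.
  move=> k; have := H k 1 ltac:(apply/andP; lra).
  by rewrite ltr_norml => /andP [h1 h2]; apply/andP; lra.
have piece : forall (k : int) t, k%:~R <= t <= k%:~R + 1 ->
    F t = s k%:~R + (t - k%:~R) * (s (k%:~R + 1) - s k%:~R).
  move=> k t /andP [h1 h2]; rewrite /F.
  case: (ltP t (k%:~R + 1)) => h3.
    suff -> : Num.floor t = k by [].
    by apply: floor_def; rewrite h1 intrD h3.
  have -> : t = (k + 1)%:~R by rewrite intrD; apply/eqP; rewrite eq_le h2 h3.
  rewrite intrKfloor !intrD subrr mul0r addr0; ring.
have inpiece : forall (k : int) t1 t2, k%:~R <= t1 -> t1 <= t2 -> t2 <= k%:~R + 1 ->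
    (1 - a) * (t2 - t1) <= F t2 - F t1 <= (1 + a) * (t2 - t1).
  move=> k t1 t2 h1 h2 h3.
  rewrite (piece k t1 ltac:(apply/andP; lra)) (piece k t2 ltac:(apply/andP; lra)).
  have /andP [m1 m2] := slope k.
  set m := s (k%:~R + 1) - s k%:~R in m1 m2 *.
  have e : s k%:~R + (t2 - k%:~R) * m - (s k%:~R + (t1 - k%:~R) * m) = (t2 - t1) * m by ring.
  rewrite e; have d0 : 0 <= t2 - t1 by lra.
  have p1 : 0 <= (t2 - t1) * (m - (1 - a)) by apply: mulr_ge0; lra.
  have p2 : 0 <= (t2 - t1) * ((1 + a) - m) by apply: mulr_ge0; lra.
  apply/andP; split; nra.
have step : forall n : nat, forall t1 t2, t1 <= t2 -> t2 <= (Num.floor t1)%:~R + n%:R ->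
    (1 - a) * (t2 - t1) <= F t2 - F t1 <= (1 + a) * (t2 - t1).
  elim => [|n IH] t1 t2 h12 h2.
    have := floor_le t1; rewrite addr0 in h2 => h.
    have -> : t2 = t1 by apply/eqP; rewrite eq_le h12; lra.
    by rewrite !subrr !mulr0 lexx.
  set k := Num.floor t1 in h2.
  have hk1 : k%:~R <= t1 by apply: floor_le.
  have hk2 : t1 < k%:~R + 1 by have := floorD1_gt t1; rewrite intrD.
  case: (leP t2 (k%:~R + 1)) => h3; first exact: (inpiece k).
  have A := inpiece k t1 (k%:~R + 1) hk1 (ltW hk2) (lexx _).
  have B : (1 - a) * (t2 - (k%:~R + 1)) <= F t2 - F (k%:~R + 1) <= (1 + a) * (t2 - (k%:~R + 1)).
    apply: IH; first lra.
    have -> : Num.floor (k%:~R + 1 : R) = k + 1.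
      by rewrite -(intrD _ k 1) intrKfloor.
    by rewrite intrD; move: h2; rewrite -addn1 natrD; lra.
  move: A B => /andP [A1 A2] /andP [B1 B2]; apply/andP; split; lra.
have bil : forall t1 t2, t1 <= t2 ->
    (1 - a) * (t2 - t1) <= F t2 - F t1 <= (1 + a) * (t2 - t1).
  move=> t1 t2 h; apply: (step (Num.truncn (t2 - (Num.floor t1)%:~R)).+1) => //.
  have := @real_truncnS_gt _ (t2 - (Num.floor t1)%:~R) (num_real _); lra.
exists F; split; first by apply: (@bilip_homeo F (1 - a) (1 + a) _ _ bil); lra.
move=> t; set k := Num.floor t.
have hk1 : k%:~R <= t by apply: floor_le.
have hk2 : t < k%:~R + 1 by have := floorD1_gt t; rewrite intrD.
rewrite (piece k t ltac:(apply/andP; lra)).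
have := H k (t - k%:~R) ltac:(apply/andP; lra).
have -> : k%:~R + (t - k%:~R) = t :> R by ring.
rewrite ltr_norml => /andP [h1 h2].
have /andP [m1 m2] := slope k.
set m := s (k%:~R + 1) - s k%:~R in m1 m2 *.
set tau := t - k%:~R in h1 h2 *.
have t0 : 0 <= tau by rewrite /tau; lra.
have t1 : tau <= 1 by rewrite /tau; lra.
have p1 : 0 <= tau * (m - (1 - a)) by apply: mulr_ge0; lra.
have p2 : 0 <= tau * ((1 + a) - m) by apply: mulr_ge0; lra.
have p3 : 0 <= (1 - tau) * a by apply: mulr_ge0; lra.
rewrite ltr_norml; apply/andP; split; nra.
Qed.


Lemma ivt_abs (f : R -> R) A t0 t1 : continuous f -> `|f t0| < A -> A <= `|f t1| ->
  exists t, ((t0 <= t <= t1) \/ (t1 <= t <= t0)) /\ (f t = A \/ f t = - A).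
Proof.
move=> fc h0 h1.
move: h0; rewrite ltr_norml => /andP [a1 a2].
have h1' : A <= f t1 \/ f t1 <= - A.
  by move: h1; rewrite ler_normr => /orP [h|h]; [left|right]; lra.
have key : forall u v, u <= v -> (forall w, Num.min (f u) (f v) <= w <= Num.max (f u) (f v) ->
    exists t, u <= t <= v /\ f t = w).
  move=> u v uv w hw; have [c] := @IVT R f u v w uv (continuous_subspaceT fc) hw.
  by rewrite in_itv /= => hc fcw; exists c.
have mm : forall p q w : R, (p <= w <= q) \/ (q <= w <= p) -> Num.min p q <= w <= Num.max p q.
  move=> p q w [/andP [h2 h3]|/andP [h2 h3]]; apply/andP; split;
    rewrite ?ge_min ?le_max; apply/orP; by [left|right].
case: (leP t0 t1) => h01.
  have [w [hw1 hw2]] : exists w, (w = A \/ w = - A) /\ Num.min (f t0) (f t1) <= w <= Num.max (f t0) (f t1).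
    case: h1' => h; [exists A|exists (- A)]; split; auto; apply: mm; [left|right]; apply/andP; lra.
  have [t [ht fw]] := key t0 t1 h01 w hw2.
  exists t; split; first by left.
  rewrite fw.
  by case: hw1 => ->; auto.
have h10 := ltW h01.
have [w [hw1 hw2]] : exists w, (w = A \/ w = - A) /\ Num.min (f t1) (f t0) <= w <= Num.max (f t1) (f t0).
  case: h1' => h; [exists A|exists (- A)]; split; auto; apply: mm; [right|left]; apply/andP; lra.
have [t [ht fw]] := key t1 t0 h10 w hw2.
exists t; split; first by right.
rewrite fw.
by case: hw1 => ->; auto.
Qed.


Lemma cont_shift (s : R -> R) t c : continuous s -> continuous (fun tau => s (t + tau) + c - tau).
Proof.
move=> sc x; apply: cvgB; last exact: cvg_id.
apply: cvgD; last exact: cvg_cst.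
apply: (@continuous_comp _ _ _ (fun tau => t + tau) s); last exact: sc.
by apply: cvgD; [exact: cvg_cst|exact: cvg_id].
Qed.

End Q.

Section P.
Variable R : realType.
Variable X : Type.
Variable d : X -> X -> R.
Variable phi : R -> X -> X.
Hypothesis hm : is_metric d.
Hypothesis hphi : is_flow d phi.
Variable L : set X.
Hypothesis hLc : mcompact d L.

Lemma d_ge0 x y : 0 <= d x y. Proof. by case: hm. Qed.
Lemma dxx x : d x x = 0. Proof. by case: hm => _ [h _]; apply: (proj2 (h x x)). Qed.
Lemma dC x y : d x y = d y x. Proof. by case: hm => _ [_ [h _]]. Qed.
Lemma dtri x y z : d x z <= d x y + d y z. Proof. by case: hm => _ [_ [_ h]]. Qed.
Lemma d_eq0 x y : d x y = 0 -> x = y. Proof. by case: hm => _ [h _]; apply: (proj1 (h x y)). Qed.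

Lemma leb (G : X -> R -> Prop) :
  (forall z, L z -> exists r, 0 < r /\ G z r) ->
  exists r0, 0 < r0 /\ forall w, L w -> exists z r, G z r /\ d z w < r / 2 /\ r0 <= r / 2.
Proof.
move=> hG.
pose I := {z : X | L z}.
have hr : forall i : I, {r | 0 < r /\ G (proj1_sig i) r}.
  by move=> [z Lz]; apply: cid; exact: hG.
pose rf i := proj1_sig (hr i).
have rfP i : 0 < rf i /\ G (proj1_sig i) (rf i) by rewrite /rf; case: (hr i).
pose U (i : I) := [set w | d (proj1_sig i) w < rf i / 2].
have [] := @hLc I U.
- move=> i w /= Uw; exists (rf i / 2 - d (proj1_sig i) w); split; first by rewrite subr_gt0.
  move=> y hy; rewrite /U /=.
  have := dtri (proj1_sig i) w y; lra.
- move=> w Lw; exists (exist _ w Lw); rewrite /U /= dxx.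
  by have [+ _] := rfP (exist _ w Lw); lra.
move=> l hl.
have r0pos : forall l' : seq I, 0 < foldr (fun i m => Num.min (rf i / 2) m) 1 l'.
  elim => [|i l' IH] /=; first lra.
  by rewrite lt_min IH andbT; have [+ _] := rfP i; lra.
have r0le : forall (l' : seq I) i, List.In i l' -> foldr (fun i m => Num.min (rf i / 2) m) 1 l' <= rf i / 2.
  elim => [|j l' IH] //= i [->|hi]; first by rewrite ge_min lexx.
  by rewrite ge_min (IH i hi) orbT.
pose r0 := foldr (fun i m => Num.min (rf i / 2) m) 1 l.
have := r0pos l; have := r0le l; rewrite -/r0 => r0le' r0pos'.
exists r0; split => // w Lw.
have [i [il Ui]] := hl w Lw.
exists (proj1_sig i), (rf i); split; first by case: (rfP i).
by split => //; apply: r0le'.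
Qed.



Lemma phi_cont t x e : 0 < e -> exists del, 0 < del /\
  forall s y, `|s - t| < del -> d x y < del -> d (phi t x) (phi s y) < e.
Proof. by case: hphi => h _; apply: h. Qed.
Lemma phi0 x : phi 0 x = x. Proof. by case: hphi => _ []. Qed.
Lemma phiD t s x : phi (t + s) x = phi t (phi s x). Proof. by case: hphi => _ []. Qed.
Lemma phiN t x : phi (- t) (phi t x) = x.
Proof. by rewrite -phiD addNr phi0. Qed.
Lemma phiNr t x : phi t (phi (- t) x) = x.
Proof. by rewrite -phiD subrr phi0. Qed.

Hypothesis hLinv : forall t x, L x -> L (phi t x).
Hypothesis hLsing : forall x, L x -> exists t, phi t x <> x.

Lemma d_gt0 x y : x <> y -> 0 < d x y.
Proof. by move=> nxy; rewrite lt_neqAle d_ge0 andbT eq_sym; apply/eqP => /d_eq0. Qed.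

Lemma disp eta : 0 < eta -> exists c, 0 < c /\
  forall w v, L w -> `|v| < c -> d w (phi v w) < eta.
Proof.
move=> he.
have [] := leb (fun z r => r <= eta / 2 /\ forall w v, d z w < r -> `|v| < r -> d z (phi v w) < eta / 2).
  move=> z Lz; have [del [dp hd]] := @phi_cont 0 z (eta / 2) ltac:(lra).
  exists (Num.min del (eta / 2)); split; first by rewrite lt_min dp /=; lra.
  split; first by rewrite ge_min lexx orbT.
  move=> w v hzw hv; rewrite -{1}(phi0 z); apply: hd.
    by rewrite subr0; apply: lt_le_trans hv _; rewrite ge_min lexx.
  by apply: lt_le_trans hzw _; rewrite ge_min lexx.
move=> r0 [r0p hr0]; exists r0; split => // w v Lw hv.
have [z [r [[rle hG] [hzw r0le]]]] := hr0 w Lw.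
have h1 := hG w v ltac:(lra) ltac:(lra).
have := dtri w z (phi v w); rewrite (dC w z); lra.
Qed.

Lemma ucfix c eta : 0 < eta -> exists rho, 0 < rho /\
  forall p q, L p -> d p q < rho -> d (phi c p) (phi c q) < eta.
Proof.
move=> he.
have [] := leb (fun z r => forall w, d z w < r -> d (phi c z) (phi c w) < eta / 2).
  move=> z Lz; have [del [dp hd]] := @phi_cont c z (eta / 2) ltac:(lra).
  exists del; split => // w hw; apply: hd => //; by rewrite subrr normr0.
move=> r0 [r0p hr0]; exists r0; split => // p q Lp hpq.
have [z [r [hG [hzp r0le]]]] := hr0 p Lp.
have h1 := hG p ltac:(lra).
have hzq : d z q < r by have := dtri z p q; lra.
have h2 := hG q hzq.
have := dtri (phi c p) (phi c z) (phi c q); rewrite (dC (phi c p) (phi c z)); lra.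
Qed.

Lemma gap u : (forall w, L w -> phi u w <> w) -> exists b, 0 < b /\
  forall w, L w -> b <= d w (phi u w).
Proof.
move=> hu.
have [] := leb (fun z r => forall w, d z w < r -> r <= d w (phi u w)).
  move=> z Lz; have Dp := @d_gt0 z (phi u z) (nesym (hu z Lz)).
  set D := d z (phi u z) in Dp *.
  have [del [dp hd]] := @phi_cont u z (D / 4) ltac:(lra).
  exists (Num.min del (D / 4)); split; first by rewrite lt_min dp /=; lra.
  move=> w hw.
  have hw1 : d z w < del by apply: lt_le_trans hw _; rewrite ge_min lexx.
  have hw2 : d z w < D / 4 by apply: lt_le_trans hw _; rewrite ge_min lexx orbT.
  have h3 := hd u w ltac:(by rewrite subrr normr0) hw1.
  have t1 := dtri z w (phi u z); have t2 := dtri w (phi u w) (phi u z).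
  rewrite (dC (phi u w)) in t2.
  have : Num.min del (D / 4) <= D / 4 by rewrite ge_min lexx orbT.
  rewrite -/D in t1; lra.
move=> r0 [r0p hr0]; exists r0; split => // w Lw.
have [z [r [hG [hzw r0le]]]] := hr0 w Lw.
have := hG w ltac:(lra); lra.
Qed.


Lemma per_nat u w : phi u w = w -> forall n : nat, phi (n%:R * u) w = w.
Proof.
move=> hu; elim => [|n IH]; first by rewrite mul0r phi0.
by rewrite -addn1 natrD mulrDl mul1r phiD hu IH.
Qed.

Lemma per_int u w : phi u w = w -> forall k : int, phi (k%:~R * u) w = w.
Proof.
move=> hu [n|n].
  by rewrite -pmulrn; apply: per_nat.
rewrite NegzE mulrNz mulNr -pmulrn.
by rewrite -{1}(@per_nat u w hu n.+1) phiN.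


Qed.

Lemma noper : exists p0, 0 < p0 /\ forall w u, L w -> 0 < u -> u <= p0 -> phi u w <> w.
Proof.
have [] := leb (fun z r => exists tau K, forall w, d z w < r ->
    (forall v, `|v| <= r -> d w (phi v w) < K) /\ K <= d w (phi tau w)).
  move=> z Lz; have [tau htau] := @hLsing z Lz.
  have Dp := @d_gt0 z (phi tau z) (nesym htau).
  set D := d z (phi tau z) in Dp *.
  have [del1 [dp1 hd1]] := @phi_cont tau z (D / 4) ltac:(lra).
  have [del2 [dp2 hd2]] := @phi_cont 0 z (D / 4) ltac:(lra).
  pose r := Num.min (Num.min del1 (del2 / 2)) (D / 4).
  have r1 : r <= del1 by rewrite /r !ge_min lexx.
  have r2 : r <= del2 / 2 by rewrite /r !ge_min lexx orbT.
  have r3 : r <= D / 4 by rewrite /r !ge_min lexx orbT.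
  have rp : 0 < r by rewrite /r !lt_min dp1 /=; lra.
  exists r; split => //; exists tau, (D / 2) => w hw; split.
    move=> v hv.
    have := hd2 v w ltac:(rewrite subr0; lra) ltac:(lra).
    rewrite phi0 => h.
    have := dtri w z (phi v w); rewrite (dC w z); lra.
  have h3 := hd1 tau w ltac:(by rewrite subrr normr0) ltac:(lra).
  have t1 := dtri z w (phi tau z); have t2 := dtri w (phi tau w) (phi tau z).
  rewrite (dC (phi tau w)) in t2; rewrite -/D in t1; lra.
move=> r0 [r0p hr0]; exists r0; split => // w u Lw up ule hper.
have [z [r [[tau [K hG]] [hzw r0le]]]] := hr0 w Lw.
have [hsmall hbig] := hG w ltac:(have := d_ge0 z w; lra).
pose k := Num.floor (tau / u).
have k1 : k%:~R <= tau / u by apply: floor_le.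
have k2 : tau / u < k%:~R + 1 by have := floorD1_gt (tau / u); rewrite intrD.
have k1' : k%:~R * u <= tau by rewrite -ler_pdivlMr.
have k2' : tau < k%:~R * u + u.
  by move: k2; rewrite ltr_pdivrMr // mulrDl mul1r.
have e : phi tau w = phi (tau - k%:~R * u) w.
  by rewrite -{2}(@per_int u w hper k) -phiD subrK.
have := hsmall (tau - k%:~R * u).
rewrite -e => h; have : `|tau - k%:~R * u| <= r.
  by rewrite ger0_norm; lra.
move=> /h; lra.
Qed.


Lemma uc01 eta : 0 < eta -> exists rho, 0 < rho /\
  forall p q tau, L p -> L q -> 0 <= tau <= 1 -> d p q < rho -> d (phi tau p) (phi tau q) < eta.
Proof.
move=> he.
have [c [cp hc]] := @disp (eta / 3) ltac:(lra).
have T : forall n : nat, exists rho, 0 < rho /\ forall p q tau, L p -> L q ->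
    0 <= tau <= n%:R * c -> d p q < rho -> d (phi tau p) (phi tau q) < eta.
  elim => [|n [rn [rnp IH]]].
    exists eta; split => // p q tau _ _; rewrite mul0r => /andP [h1 h2].
    have -> : tau = 0 by apply/eqP; rewrite eq_le h1 h2.
    by rewrite !phi0.
  have [r' [r'p hr']] := @ucfix c rn rnp.
  exists (Num.min (eta / 3) r'); split; first by rewrite lt_min r'p; lra.
  move=> p q tau Lp Lq /andP [t0 t1] hpq.
  have h1 : d p q < eta / 3 by apply: lt_le_trans hpq _; rewrite ge_min lexx.
  have h2 : d p q < r' by apply: lt_le_trans hpq _; rewrite ge_min lexx orbT.
  case: (ltP tau c) => htc.
    have a1 := hc p tau Lp ltac:(rewrite ger0_norm //).
    have a2 := hc q tau Lq ltac:(rewrite ger0_norm //).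
    have := dtri (phi tau p) p (phi tau q); have := dtri p q (phi tau q).
    rewrite (dC (phi tau p) p); lra.
  have -> : tau = (tau - c) + c by rewrite subrK.
  rewrite (phiD (tau - c) c p) (phiD (tau - c) c q); apply: (IH (phi c p) (phi c q) (tau - c)); try by apply: hLinv.
    apply/andP; split; first lra.
    by move: t1; rewrite -addn1 natrD mulrDl mul1r; lra.
  exact: hr'.
pose N := (Num.truncn (c^-1)).+1.
have hN : c^-1 < N%:R by apply: real_truncnS_gt; apply: num_real.
have hN' : 1 <= N%:R * c.
  by apply: ltW; move: hN; rewrite -[c^-1]mul1r ltr_pdivrMr.
have [rho [rp hr]] := T N; exists rho; split => // p q tau Lp Lq /andP [t0 t1] hpq.
by apply: hr => //; apply/andP; split => //; lra.
Qed.


Hypothesis hX : mcompact d setT.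

Lemma dbound : (exists x0 : X, True) -> exists M, forall x y, d x y <= M.
Proof.
move=> [x0 _].
have [] := @hX X (fun i => [set w | d i w < 1]).
- move=> i w /= hw; exists (1 - d i w); split; first by rewrite subr_gt0.
  move=> y hy; have := dtri i w y; lra.
- by move=> w _; exists w; rewrite /= dxx; lra.
move=> l hl.
pose S := foldr (fun i m => d i x0 + m) 0 l.
have Sle : forall (l' : seq X) i, List.In i l' -> d i x0 <= foldr (fun i m => d i x0 + m) 0 l'.
  elim => [|j l' IH] //= i [->|hi].
    suff : 0 <= foldr (fun i m => d i x0 + m) 0 l' by lra.
    by elim: l' {IH} => [|k l'' IH'] /=; [lra|have := d_ge0 k x0; lra].
  by have := IH i hi; have := d_ge0 j x0; lra.
have hw : forall w, d w x0 <= 1 + S.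
  move=> w; have [i [il hi]] := hl w I.
  have h1 := Sle l i il; rewrite -/S in h1; have := dtri w i x0; rewrite (dC w i); move: hi => /= hi; lra.
exists (2 * (1 + S)) => x y.
have := dtri x x0 y; have := hw x; have := hw y; rewrite (dC x0 y); lra.
Qed.

Lemma sing_sep : (exists z, L z) -> exists c, 0 < c /\
  forall z, L z -> c <= dist d z (Sing phi).
Proof.
move=> [z0 Lz0].
rewrite /dist; case: pselect => [[a0 Sa0]|nS].
  have [] := leb (fun z r => forall w a, d z w < r -> Sing phi a -> r <= d w a).
    move=> z Lz; have [tau htau] := @hLsing z Lz.
    have Dp := @d_gt0 z (phi tau z) (nesym htau).
    set D := d z (phi tau z) in Dp *.
    have [del [dp hd]] := @phi_cont tau z (D / 3) ltac:(lra).
    pose r := Num.min del (D / 3) / 2.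
    have r1 : 2 * r <= del by rewrite /r mulrC divfK ?ge_min ?lexx //; lra.
    have r2 : 2 * r <= D / 3 by rewrite /r mulrC divfK ?ge_min ?lexx ?orbT //; lra.
    have rp : 0 < r by rewrite /r divr_gt0 // lt_min dp /=; lra.
    exists r; split => // w a hw Sa.
    have hza : 2 * r <= d z a.
      rewrite leNgt; apply/negP => hlt.
      have h := hd tau a ltac:(by rewrite subrr normr0) ltac:(lra).
      rewrite Sa in h.
      have := dtri z a (phi tau z); rewrite -/D (dC a (phi tau z)); lra.
    have := dtri z w a; lra.
  move=> r0 [r0p hr0]; exists r0; split => // z Lz.
  apply: lb_le_inf; first by exists (d z a0), a0.
  move=> x [a [Sa ->]].
  have [z' [r [hG [hzw r0le]]]] := hr0 z Lz.
  have := hG z a ltac:(have := d_ge0 z' z; lra) Sa; lra.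
have [tau htau] := @hLsing z0 Lz0.
have Dp := @d_gt0 z0 (phi tau z0) (nesym htau).
exists (d z0 (phi tau z0)); split => // z _.
have [M hM] := dbound (ex_intro _ z0 I).
apply: ub_le_sup; last by exists z0, (phi tau z0).
by exists M => x [x1 [y1 ->]].
Qed.


Lemma gap_sym u b : (forall w, L w -> b <= d w (phi u w)) -> forall w, L w -> b <= d w (phi (- u) w).
Proof.
move=> h w Lw; have := h (phi (- u) w) (@hLinv (- u) w Lw).
by rewrite phiNr dC.
Qed.

Lemma core : singular_expansive d phi -> forall e, 0 < e -> exists del, 0 < del /\
  forall x y (s : R -> R), L x -> L y -> continuous s -> s 0 = 0 ->
  (forall t, d (phi t x) (phi (s t) y) <= del) -> exists r, -e <= r <= e /\ y = phi r x.
Proof.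
move=> hse e ep.
case: (pselect (exists z, L z)) => [hne|hne]; last first.
  exists 1; split => // x y s Lx; by exfalso; apply: hne; exists x.
have [p0 [p0p hp0]] := noper.
pose A := Num.min e p0 / 2.
have Ae : A <= e / 2 by rewrite /A ler_pM2r // ge_min lexx.
have Ap0 : A <= p0 / 2 by rewrite /A ler_pM2r // ge_min lexx orbT.
have Ap : 0 < A by rewrite /A divr_gt0 // lt_min ep p0p.
have [bA [bAp hbA]] := @gap A (fun w Lw => hp0 w A Lw Ap ltac:(lra)).
have [d1 [d1p hd1]] := hse (A / 2) ltac:(lra).
have [c [cp hc]] := sing_sep hne.
pose dP := d1 * c.
have dPe : dP = d1 * c by [].
have dPp : 0 < dP by rewrite mulr_gt0.
have [kap [kapp hkap]] := @disp (dP / 2) ltac:(lra).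
pose a' := Num.min (Num.min (A / 8) (kap / 4)) (1 / 4).
have a'1 : a' <= A / 8 by rewrite /a' !ge_min lexx.
have a'2 : a' <= kap / 4 by rewrite /a' !ge_min lexx orbT.
have a'3 : a' <= 1 / 4 by rewrite /a' !ge_min lexx orbT.
have a'p : 0 < a' by rewrite /a' !lt_min; apply/andP; split; [apply/andP; split|]; lra.
have [b' [b'p hb']] := @gap a' (fun w Lw => hp0 w a' Lw a'p ltac:(lra)).
have [rho [rhop hrho]] := @uc01 (b' / 2) ltac:(lra).
pose del := Num.min (Num.min (bA / 2) (b' / 4)) (Num.min (rho / 2) (dP / 2)).
have del1 : del <= bA / 2 by rewrite /del !ge_min lexx.
have del2 : del <= b' / 4 by rewrite /del !ge_min lexx orbT.
have del3 : del <= rho / 2 by rewrite /del !ge_min lexx orbT.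
have del4 : del <= dP / 2 by rewrite /del !ge_min lexx !orbT.
have delp : 0 < del.
  by rewrite /del !lt_min; apply/andP; split; apply/andP; split; lra.
exists del; split => // x y s Lx Ly sc s0 hxy.
have coarse : forall t tau, 0 <= tau <= 1 -> `|s (t + tau) - s t - tau| < a'.
  move=> t tau /andP [t0 t1]; rewrite ltNge; apply/negP => hbig.
  have [tau2 [htau hv]] := @ivt_abs _ (fun tau => s (t + tau) + - s t - tau) a' 0 tau
     (@cont_shift R s t (- s t) sc) ltac:(by rewrite /= addr0 subrr subr0 normr0) hbig.
  have t2 : 0 <= tau2 <= 1 by case: htau => /andP [h1 h2]; apply/andP; lra.
  move: hv => /=; set v := s (t + tau2) + - s t - tau2 => hv.
  pose w := phi (s t + tau2) y.
  have Lw : L w by apply: hLinv.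
  have ew : phi v w = phi (s (t + tau2)) y by rewrite /w -phiD; congr phi; rewrite /v; ring.
  have h1 : d w (phi (t + tau2) x) < b' / 2.
    rewrite /w (addrC (s t) tau2) (addrC t tau2) !phiD.
    apply: hrho => //; try by apply: hLinv.
    rewrite dC; have := hxy t; lra.
  have h2 := hxy (t + tau2).
  have h3 : d w (phi v w) < b'.
    rewrite ew; have := dtri w (phi (t + tau2) x) (phi (s (t + tau2)) y); lra.
  case: hv => hv; rewrite hv in h3.
    by have := hb' w Lw; lra.
  by have := @gap_sym a' b' hb' w Lw; lra.
have [s' [hs' s'close]] := @pl_homeo R s a' a'p a'3 (fun k tau h => coarse k%:~R tau h).
have hyp : forall t, d (phi t x) (phi (s' t) y) <= d1 * dist d (phi t x) (Sing phi).
  move=> t.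
  have e1 : phi (s' t) y = phi (s' t - s t) (phi (s t) y) by rewrite -phiD subrK.
  have hcl := s'close t.
  have h1 := hkap (phi (s t) y) (s' t - s t) (@hLinv (s t) y Ly) ltac:(lra).
  rewrite -e1 in h1.
  have h2 := hxy t.
  have h3 := hc (phi t x) (@hLinv t x Lx).
  have h4 : d1 * c <= d1 * dist d (phi t x) (Sing phi) by rewrite ler_pM2l.
  have := dtri (phi t x) (phi (s t) y) (phi (s' t) y); lra.
have [t0 [u [hu1 [hu2 hu3]]]] := hd1 x y s' hs' hyp.
pose r0 := - s' t0 + u.
have yr : y = phi r0 x by rewrite /r0 phiD -hu3 phiN.
pose g := fun t => s (0 + t) + r0 - t.
have gc : continuous g := @cont_shift R s 0 r0 sc.
have gk : forall t, d (phi t x) (phi (g t) (phi t x)) <= del.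
  move=> t; have -> : phi (g t) (phi t x) = phi (s t) y.
    by rewrite yr -!phiD /g add0r subrK.
  exact: hxy t.
have gt0 : `|g t0| < A.
  have := s'close t0; rewrite /g /r0 add0r !ltr_norml => /andP [h1 h2].
  apply/andP; split; lra.
have g0 : `|g 0| < A.
  rewrite ltNge; apply/negP => hbig.
  have [t [_ ht]] := @ivt_abs R g A t0 0 gc gt0 hbig.
  have Lt := @hLinv t x Lx.
  have := gk t; case: ht => ->.
    by have := hbA _ Lt; lra.
  by have := @gap_sym A bA hbA _ Lt; lra.
exists r0; split; last exact yr.
have e0 : g 0 = r0 by rewrite /g add0r s0 add0r subr0.
move: g0; rewrite e0 ltr_norml => /andP [h1 h2]; apply/andP; split; lra.
Qed.

End P.

Theorem mainTheorem15 (R : realType) (X : Type) (d : X -> X -> R) (phi : R -> X -> X)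
  (hX : compact_metric_space d) (hphi : is_flow d phi)
  (hse : singular_expansive d phi)
  (L : set X) (hLc : mcompact d L) (hLinv : flow_invariant phi L)
  (hLsing : L `&` Sing phi = set0) :
  expansive (@sub_dist R X d L) (restrict_flow hLinv).
Proof.
have [hm hXc] := hX.
have hLinv' : forall t x, L x -> L (phi t x) := invariant_fwd hLinv.
have hLsing' : forall x, L x -> exists t, phi t x <> x.
  move=> x Lx; apply: contrapT => hn.
  have : (L `&` Sing phi) x.
    split => // t; apply: contrapT => ne; apply: hn; by exists t.
  by rewrite hLsing.
move=> e ep.
have [del [delp hdel]] := @core R X d phi hm hphi L hLc hLinv' hLsing' hXc hse e ep.
exists del; split => //.
move=> [x Lx] [y Ly] s sc s0 hxy.
have [r [hr ey]] := hdel x y s Lx Ly sc s0 hxy.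
move: hr => /andP [hr1 hr2].
exists r; split => //; split => //.
rewrite /restrict_flow /=; subst y.
by congr exist; apply: Prop_irrelevance.
Qed.
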